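(* Let $(V,\varphi,\xi,\eta,g)$, $\mathcal{F}$, $G$, $p_1,\dots,p_4$ and the inner product $\langle\cdot,\cdot\rangle$ be as in the context, and let $W_i=\mathrm{Im}\,p_i$ ($i=1,2,3,4$). Then $\mathcal{F}=W_1\oplus W_2\oplus W_3\oplus W_4$, the subspaces $W_i$ are mutually orthogonal with respect to $\langle\cdot,\cdot\rangle$, and each $W_i$ is invariant under the action of $G$.
   Context: Let $V$ be a real vector space of dimension $2n+1$ with an endomorphism $\varphi$, a vector $\xi$ and a linear form $\eta$ such that $\varphi\xi=0$, $\eta\circ\varphi=0$, $\eta(\xi)=1$, $\varphi^2=\mathrm{id}-\eta\otimes\xi$, and such that $\varphi$ restricted to $\mathbb{D}=\ker\eta$ has eigenvalues $\pm1$ with eigenspaces of equal dimension $n$. Let $g$ be a nondegenerate symmetric bilinear form on $V$ with $g(\varphi X,\varphi Y)=-g(X,Y)+\eta(X)\eta(Y)$; then $\eta(X)=g(X,\xi)$. Write $hX=X-\eta(X)\xi$. Fix a basis $\{e_1,\dots,e_{2n}\}$ of $\mathbb{D}$ and write $Y=Y^ie_i+\eta(Y)\xi$. Let $\mathcal{F}$ be the vector space of all $(0,3)$-tensors of the form $F(X,Y,Z)=Y^ig(\mathcal{A}_{e_i}X,Z)+\eta(Y)g(\mathcal{A}_\xi X,\varphi Z)$, where $\mathcal{A}_{e_i}:V\to V$ and $\mathcal{A}_\xi:V\to\mathbb{D}$ are linear maps satisfying for all $X$, $i,j$: $g(\mathcal{A}_{e_i}X,e_j)=-g(\mathcal{A}_{e_j}X,e_i)$;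 $\mathcal{A}_{\varphi e_i}X=-\varphi(\mathcal{A}_{e_i}X)-g(\mathcal{A}_\xi X,e_i)\xi$ (index extended linearly); $\eta(\mathcal{A}_{e_i}X)=-g(\mathcal{A}_\xi X,\varphi e_i)$; $\eta(\mathcal{A}_\xi X)=0$. The inner product on $\mathcal{F}$ is $\langle F_1,F_2\rangle=g^{aq}g^{br}g^{cs}F_1(f_a,f_b,f_c)F_2(f_q,f_r,f_s)$ for any basis $\{f_1,\dots,f_{2n+1}\}$ of $V$, $(g^{ab})$ the inverse of $(g(f_a,f_b))$. Let $G$ be the group of linear automorphisms $a$ of $V$ with $a\varphi=\varphi a$, $a\xi=\xi$, $\eta\circ a=\eta$, $g(aX,aY)=g(X,Y)$, acting on $\mathcal{F}$ by $(\lambda(a)F)(X,Y,Z)=F(a^{-1}X,a^{-1}Y,a^{-1}Z)$. Define $p_1(F)(X,Y,Z)=F(hX,hY,hZ)$; $p_2(F)(X,Y,Z)=-\eta(Y)F(hX,hZ,\xi)+\eta(Z)F(hX,hY,\xi)$; $p_3(F)(X,Y,Z)=\eta(X)F(\xi,hY,hZ)$; $p_4(F)(X,Y,Z)=\eta(X)\eta(Y)F(\xi,\xi,hZ)-\eta(X)\eta(Z)F(\xi,\xi,hY)$. *)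

(* Defs.v *)
From mathcomp Require Import all_boot all_order all_algebra.
From mathcomp Require Import reals.
Set Implicit Arguments. Unset Strict Implicit. Unset Printing Implicit Defensive.
Import Order.TTheory GRing.Theory Num.Theory.
Local Open Scope ring_scope.

Section Defs.
Variables (R : realType) (m : nat).
Notation V := 'rV[R]_m.

(* Row-vector convention: a linear map with matrix M sends X to X *m M. *)
(* phi X := X *m Phi ; eta X := (X *m eta) 0 0 ; g(X,Y) := (X *m Gm *m Y^T) 0 0 *)
Definition etaf (eta : 'cV[R]_m) (X : V) : R := (X *m eta) 0 0.
Definition gf (Gm : 'M[R]_m) (X Y : V) : R := (X *m Gm *m Y^T) 0 0.
Definition hmap (xi : V) (eta : 'cV[R]_m) (X : V) : V := X - etaf eta X *: xi.

Definition tensor := V -> V -> V -> R.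

(* The space \mathcal{F}.  A Y is the matrix of \mathcal{A}_Y for Y in D
   (linear in Y: the linear extension of i |-> \mathcal{A}_{e_i});
   Axi is the matrix of \mathcal{A}_\xi. *)
Definition inF (Phi : 'M[R]_m) (xi : V) (eta : 'cV[R]_m) (Gm : 'M[R]_m)
  (F : tensor) : Prop :=
  exists (A : V -> 'M[R]_m) (Axi : 'M[R]_m),
    [/\ forall (c : R) (Y Z : V), A (c *: Y + Z) = c *: A Y + A Z,
        forall X Y Z : V, etaf eta Y = 0 -> etaf eta Z = 0 ->
          gf Gm (X *m A Y) Z = - gf Gm (X *m A Z) Y,
        forall X Y : V, etaf eta Y = 0 ->
          X *m A (Y *m Phi) = - ((X *m A Y) *m Phi) - gf Gm (X *m Axi) Y *: xi,
        forall X Y : V, etaf eta Y = 0 ->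
          etaf eta (X *m A Y) = - gf Gm (X *m Axi) (Y *m Phi)
      & forall X : V, etaf eta (X *m Axi) = 0]
    /\ F = fun X Y Z => gf Gm (X *m A (hmap xi eta Y)) Z
                         + etaf eta Y * gf Gm (X *m Axi) (Z *m Phi).

Definition tip (Gm : 'M[R]_m) (F1 F2 : tensor) : R :=
  let Gi := invmx Gm in
  let f := fun a : 'I_m => (delta_mx 0 a : V) in
  \sum_(a < m) \sum_(b < m) \sum_(c < m) \sum_(q < m) \sum_(r < m) \sum_(s < m)
    Gi a q * Gi b r * Gi c s * F1 (f a) (f b) (f c) * F2 (f q) (f r) (f s).

Definition inG (Phi : 'M[R]_m) (xi : V) (eta : 'cV[R]_m) (Gm : 'M[R]_m)
  (a : 'M[R]_m) : Prop :=
  [/\ a \in unitmx,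
      forall X : V, (X *m a) *m Phi = (X *m Phi) *m a,
      xi *m a = xi,
      forall X : V, etaf eta (X *m a) = etaf eta X
    & forall X Y : V, gf Gm (X *m a) (Y *m a) = gf Gm X Y].

Definition lam (a : 'M[R]_m) (F : tensor) : tensor :=
  fun X Y Z => F (X *m invmx a) (Y *m invmx a) (Z *m invmx a).

Definition p1 (xi : V) (eta : 'cV[R]_m) (F : tensor) : tensor :=
  fun X Y Z => F (hmap xi eta X) (hmap xi eta Y) (hmap xi eta Z).
Definition p2 (xi : V) (eta : 'cV[R]_m) (F : tensor) : tensor :=
  fun X Y Z => - etaf eta Y * F (hmap xi eta X) (hmap xi eta Z) xi
               + etaf eta Z * F (hmap xi eta X) (hmap xi eta Y) xi.
Definition p3 (xi : V) (eta : 'cV[R]_m) (F : tensor) : tensor :=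
  fun X Y Z => etaf eta X * F xi (hmap xi eta Y) (hmap xi eta Z).
Definition p4 (xi : V) (eta : 'cV[R]_m) (F : tensor) : tensor :=
  fun X Y Z => etaf eta X * etaf eta Y * F xi xi (hmap xi eta Z)
               - etaf eta X * etaf eta Z * F xi xi (hmap xi eta Y).

(* p i for i = 0,1,2,3 stands for p_1,...,p_4 *)
Definition pp (xi : V) (eta : 'cV[R]_m) (i : 'I_4) : tensor -> tensor :=
  match val i with
  | 0 => p1 xi eta | 1 => p2 xi eta | 2 => p3 xi eta | _ => p4 xi eta
  end.

Definition inW (Phi : 'M[R]_m) (xi : V) (eta : 'cV[R]_m) (Gm : 'M[R]_m)
  (i : 'I_4) (F : tensor) : Prop :=
  exists F0, inF Phi xi eta Gm F0 /\ F = pp xi eta i F0.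

End Defs.

(* Main.v *)
Require Import Defs.
From mathcomp Require Import all_boot all_order all_algebra.
From mathcomp Require Import reals ring lra.
From Stdlib Require Import FunctionalExtensionality.
Set Implicit Arguments. Unset Strict Implicit. Unset Printing Implicit Defensive.
Import Order.TTheory GRing.Theory Num.Theory.
Local Open Scope ring_scope.

Section Main.
Variables (R : realType) (m : nat).
Notation V := 'rV[R]_m.
Variables (Phi : 'M[R]_m) (xi : V) (eta : 'cV[R]_m) (Gm : 'M[R]_m).
Hypothesis hxiPhi : xi *m Phi = 0.
Hypothesis hetaPhi : forall X : V, etaf eta (X *m Phi) = 0.
Hypothesis hetaxi : etaf eta xi = 1.
Hypothesis hPhi2 : forall X : V, (X *m Phi) *m Phi = X - etaf eta X *: xi.
Hypothesis Gsym : Gm^T = Gm.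
Hypothesis Gunit : Gm \in unitmx.
Hypothesis hcompat : forall X Y : V,
     gf Gm (X *m Phi) (Y *m Phi) = - gf Gm X Y + etaf eta X * etaf eta Y.

Local Notation et := (etaf eta).
Local Notation g := (gf Gm).
Local Notation h := (hmap xi eta).

Lemma rowcol (k : nat) (u : V) (c : 'cV[R]_m) (v : 'rV[R]_k) :
  u *m (c *m v) = (u *m c) 0 0 *: v.
Proof. by rewrite mulmxA {1}[u *m c]mx11_scalar mul_scalar_mx. Qed.

Lemma etaD X Y : et (X + Y) = et X + et Y.
Proof. by rewrite /etaf mulmxDl mxE. Qed.
Lemma etaZ c X : et (c *: X) = c * et X.
Proof. by rewrite /etaf -scalemxAl mxE. Qed.
Lemma etaN X : et (- X) = - et X.
Proof. by rewrite /etaf mulNmx mxE. Qed.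
Lemma eta0 : et 0 = 0.
Proof. by rewrite /etaf mul0mx mxE. Qed.
Lemma etaB X Y : et (X - Y) = et X - et Y.
Proof. by rewrite etaD etaN. Qed.

Lemma gDl X Y Z : g (X + Y) Z = g X Z + g Y Z.
Proof. by rewrite /gf !mulmxDl mxE. Qed.
Lemma gZl c X Z : g (c *: X) Z = c * g X Z.
Proof. by rewrite /gf -!scalemxAl mxE. Qed.
Lemma gNl X Z : g (- X) Z = - g X Z.
Proof. by rewrite -scaleN1r gZl mulN1r. Qed.
Lemma g0l Z : g 0 Z = 0.
Proof. by rewrite /gf !mul0mx mxE. Qed.
Lemma gsym X Y : g X Y = g Y X.
Proof.
rewrite /gf -[in LHS](trmxK (X *m Gm *m Y^T)) mxE.
by rewrite !trmx_mul trmxK Gsym mulmxA.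
Qed.
Lemma gDr X Y Z : g Z (X + Y) = g Z X + g Z Y.
Proof. by rewrite !(gsym Z) gDl. Qed.
Lemma gZr c X Z : g Z (c *: X) = c * g Z X.
Proof. by rewrite !(gsym Z) gZl. Qed.
Lemma gNr X Z : g Z (- X) = - g Z X.
Proof. by rewrite !(gsym Z) gNl. Qed.
Lemma g0r Z : g Z 0 = 0.
Proof. by rewrite gsym g0l. Qed.
Lemma gBl X Y Z : g (X - Y) Z = g X Z - g Y Z.
Proof. by rewrite gDl gNl. Qed.
Lemma gBr X Y Z : g Z (X - Y) = g Z X - g Z Y.
Proof. by rewrite gDr gNr. Qed.

Lemma gxi X : g X xi = et X.
Proof.
have := hcompat X xi; rewrite hxiPhi g0r hetaxi mulr1.
by move/eqP; rewrite eq_sym addrC subr_eq0 => /eqP.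
Qed.
Lemma gxil X : g xi X = et X.
Proof. by rewrite gsym gxi. Qed.

Lemma eta_h X : et (h X) = 0.
Proof. by rewrite /hmap etaB etaZ hetaxi mulr1 subrr. Qed.
Lemma hxi : h xi = 0.
Proof. by rewrite /hmap hetaxi scale1r subrr. Qed.
Lemma hh X : h (h X) = h X.
Proof. by rewrite {1}/hmap eta_h scale0r subr0. Qed.
Lemma hD X Y : h (X + Y) = h X + h Y.
Proof. rewrite /hmap etaD scalerDl. by rewrite opprD addrACA. Qed.
Lemma hZ c X : h (c *: X) = c *: h X.
Proof. by rewrite /hmap etaZ scalerBr scalerA. Qed.
Lemma h0 : h 0 = 0.
Proof. by rewrite /hmap eta0 scale0r subr0. Qed.
Lemma hN X : h (- X) = - h X.
Proof. by rewrite -scaleN1r hZ scaleN1r. Qed.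
Lemma hB X Y : h (X - Y) = h X - h Y.
Proof. by rewrite hD hN. Qed.
Lemma hPhi X : h (X *m Phi) = X *m Phi.
Proof. by rewrite /hmap hetaPhi scale0r subr0. Qed.
Lemma hPhi' X : h X *m Phi = X *m Phi.
Proof. by rewrite /hmap mulmxBl -scalemxAl hxiPhi scaler0 subr0. Qed.
Lemma gh X Y : g (h X) Y = g X (h Y).
Proof. by rewrite /hmap gBl gBr gZl gZr gxi gxil mulrC. Qed.
Lemma hD0 X : et X = 0 -> h X = X.
Proof. by move=> e; rewrite /hmap e scale0r subr0. Qed.
Lemma gsplit W Z : g W Z = g W (h Z) + et Z * et W.
Proof. by rewrite /hmap gBr gZr gxi subrK. Qed.
Lemma hsplit X : X = h X + et X *: xi.
Proof. by rewrite /hmap subrK. Qed.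

Definition Hm : 'M[R]_m := locked (1%:M - eta *m xi).
Lemma Hm_h X : X *m Hm = h X.
Proof. by rewrite /Hm -lock mulmxBr mulmx1 rowcol. Qed.


Definition RepOK (A : V -> 'M[R]_m) (Axi : 'M[R]_m) : Prop :=
    [/\ forall (c : R) (Y Z : V), A (c *: Y + Z) = c *: A Y + A Z,
        forall X Y Z : V, et Y = 0 -> et Z = 0 ->
          g (X *m A Y) Z = - g (X *m A Z) Y,
        forall X Y : V, et Y = 0 ->
          X *m A (Y *m Phi) = - ((X *m A Y) *m Phi) - g (X *m Axi) Y *: xi,
        forall X Y : V, et Y = 0 ->
          et (X *m A Y) = - g (X *m Axi) (Y *m Phi)
      & forall X : V, et (X *m Axi) = 0].

Definition Frep (A : V -> 'M[R]_m) (Axi : 'M[R]_m) : tensor R m :=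
  fun X Y Z => g (X *m A (h Y)) Z + et Y * g (X *m Axi) (Z *m Phi).

Lemma inF_rep F : inF Phi xi eta Gm F <-> exists A Axi, RepOK A Axi /\ F = Frep A Axi.
Proof. by []. Qed.

Lemma Rep0 A Axi : RepOK A Axi -> A 0 = 0.
Proof.
case=> hl _ _ _ _; have := hl 1 0 0; rewrite !scale1r addr0 => e.
by rewrite -[LHS](addrK (A 0) (A 0)) -e subrr.
Qed.

Lemma Frep_xi3 A Axi X Y : RepOK A Axi -> Frep A Axi X Y xi = - g (X *m Axi) (Y *m Phi).
Proof.
move=> hR; case: (hR) => _ _ _ h4 _.
by rewrite /Frep gxi hxiPhi g0r mulr0 addr0 h4 ?eta_h // hPhi'.
Qed.

Lemma Frep_xi2 A Axi X Z : RepOK A Axi -> Frep A Axi X xi Z = g (X *m Axi) (Z *m Phi).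
Proof. by move=> hR; rewrite /Frep hxi (Rep0 hR) mulmx0 g0l hetaxi mul1r add0r. Qed.

Lemma RepLin A Axi : RepOK A Axi -> (forall Y Z, A (Y + Z) = A Y + A Z) /\ (forall c Y, A (c *: Y) = c *: A Y).
Proof.
move=> hR; have A0 := Rep0 hR; case: hR => hl _ _ _ _; split.
  by move=> Y Z; have := hl 1 Y Z; rewrite !scale1r.
by move=> c Y; have := hl c Y 0; rewrite !addr0 A0 addr0.
Qed.

Lemma W1F A Axi : RepOK A Axi -> inF Phi xi eta Gm (p1 xi eta (Frep A Axi)).
Proof.
move=> hR; have [AD AZ] := RepLin hR; case: (hR) => hl h2 h3 h4 h5.
exists (fun Y => Hm *m A (h Y) *m Hm), 0; split; first split.
- by move=> c Y Z; rewrite hD hZ hl mulmxDr mulmxDl -scalemxAr -scalemxAl.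
- move=> X Y Z eY eZ; rewrite !mulmxA !Hm_h !gh (hD0 eY) (hD0 eZ) h2 //.
- move=> X Y eY; rewrite mulmx0 g0l scale0r subr0 !mulmxA !Hm_h hPhi (hD0 eY) h3 //.
  by rewrite hB hN hZ hxi scaler0 subr0 hPhi hPhi'.
- by move=> X Y eY; rewrite !mulmxA !Hm_h eta_h mulmx0 g0l oppr0.
- by move=> X; rewrite mulmx0 /etaf mul0mx mxE.
apply: functional_extensionality => X; apply: functional_extensionality => Y.
apply: functional_extensionality => Z.
by rewrite /p1 /Frep eta_h mul0r addr0 mulmx0 g0l mulr0 addr0 !mulmxA !Hm_h gh !hh.
Qed.

Lemma mx_ext (M N : 'M[R]_m) : (forall X : V, X *m M = X *m N) -> M = N.
Proof. by move=> e; apply/row_matrixP => i; rewrite !rowE e. Qed.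
Lemma sc11 (u : 'M[R]_1) (v : V) : u *m v = u 0 0 *: v.
Proof. by rewrite {1}[u]mx11_scalar mul_scalar_mx. Qed.
Lemma rowcolE (X W : V) : X *m (eta *m W) = et X *: W.
Proof. exact: rowcol. Qed.

Definition A2 (Axi : 'M[R]_m) (Y : V) : 'M[R]_m := - (Hm *m Axi *m Gm *m (Y *m Phi)^T *m xi).
Lemma act2 Axi X Y : X *m A2 Axi Y = - (g (h X *m Axi) (Y *m Phi) *: xi).
Proof. by rewrite /A2 mulmxN !mulmxA Hm_h sc11. Qed.
Definition A4 (Axi : 'M[R]_m) (Y : V) : 'M[R]_m := - (eta *m (xi *m Axi *m Gm *m (Y *m Phi)^T *m xi)).
Lemma act4 Axi X Y : X *m A4 Axi Y = - ((et X * g (xi *m Axi) (Y *m Phi)) *: xi).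
Proof. by rewrite /A4 mulmxN rowcolE sc11 scalerA. Qed.
Definition A3 (A : V -> 'M[R]_m) (Y : V) : 'M[R]_m := eta *m (xi *m A (h Y) *m Hm).
Lemma act3 A X Y : X *m A3 A Y = et X *: h (xi *m A (h Y)).
Proof. by rewrite /A3 rowcolE Hm_h. Qed.

Lemma W3F A Axi : RepOK A Axi -> inF Phi xi eta Gm (p3 xi eta (Frep A Axi)).
Proof.
move=> hR; have [AD AZ] := RepLin hR; case: (hR) => hl h2 h3 h4 h5.
exists (A3 A), 0; split; first split.
- move=> c Y Z; apply: mx_ext => X.
  by rewrite mulmxDr -scalemxAr !act3 hD hZ AD AZ mulmxDr -scalemxAr hD hZ scalerDr !scalerA mulrC.
- move=> X Y Z eY eZ; rewrite !act3 !gZl !gh (hD0 eY) (hD0 eZ) h2 //.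
  by rewrite mulrN.
- move=> X Y eY; rewrite mulmx0 g0l scale0r subr0 !act3 hPhi (hD0 eY) h3 //.
  by rewrite hB hN hZ hxi scaler0 subr0 hPhi -scalemxAl hPhi' scalerN.
- by move=> X Y eY; rewrite act3 etaZ eta_h mulr0 mulmx0 g0l oppr0.
- by move=> X; rewrite mulmx0 /etaf mul0mx mxE.
apply: functional_extensionality => X; apply: functional_extensionality => Y.
apply: functional_extensionality => Z.
rewrite /p3 /Frep eta_h mul0r addr0 mulmx0 g0l mulr0 addr0 act3 gZl gh !hh.
by [].
Qed.

Lemma W2F A Axi : RepOK A Axi -> inF Phi xi eta Gm (p2 xi eta (Frep A Axi)).
Proof.
move=> hR; have [AD AZ] := RepLin hR; case: (hR) => hl h2 h3 h4 h5.
exists (A2 Axi), (Hm *m Axi); split; first split.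
- move=> c Y Z; apply: mx_ext => X.
  rewrite mulmxDr -scalemxAr !act2 (mulmxDl (c *: Y)) -scalemxAl gDr gZr.
  by rewrite scalerDl scalerN scalerA opprD.
- move=> X Y Z eY eZ; rewrite !act2 !gNl !gZl !gxil eY eZ; by rewrite !mulr0 !oppr0.
- move=> X Y eY; rewrite !act2 hPhi2 eY scale0r subr0 mulNmx -scalemxAl hxiPhi scaler0.
  by rewrite !oppr0 add0r mulmxA Hm_h.
- by move=> X Y eY; rewrite act2 etaN etaZ hetaxi mulr1 mulmxA Hm_h.
- by move=> X; rewrite mulmxA Hm_h h5.
apply: functional_extensionality => X; apply: functional_extensionality => Y.
apply: functional_extensionality => Z.
rewrite /p2 !(Frep_xi3 _ _ hR) /Frep act2 mulmxA Hm_h gNl gZl gxil !hPhi'.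
ring.
Qed.

Lemma W4F A Axi : RepOK A Axi -> inF Phi xi eta Gm (p4 xi eta (Frep A Axi)).
Proof.
move=> hR; have [AD AZ] := RepLin hR; case: (hR) => hl h2 h3 h4 h5.
exists (A4 Axi), (eta *m (xi *m Axi)); split; first split.
- move=> c Y Z; apply: mx_ext => X.
  rewrite mulmxDr -scalemxAr !act4 (mulmxDl (c *: Y)) -scalemxAl gDr gZr.
  by rewrite mulrDr scalerDl opprD scalerN scalerA mulrCA.
- move=> X Y Z eY eZ; rewrite !act4 !gNl !gZl !gxil eY eZ; by rewrite !mulr0 !oppr0.
- move=> X Y eY; rewrite !act4 hPhi2 eY scale0r subr0 mulNmx -scalemxAl hxiPhi scaler0.
  by rewrite !oppr0 add0r rowcolE gZl.
- by move=> X Y eY; rewrite act4 etaN etaZ hetaxi mulr1 rowcolE gZl.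
- by move=> X; rewrite rowcolE etaZ h5 mulr0.
apply: functional_extensionality => X; apply: functional_extensionality => Y.
apply: functional_extensionality => Z.
rewrite /p4 !(Frep_xi2 _ _ hR) /Frep act4 rowcolE gNl gZl gxil gZl !hPhi'.
ring.
Qed.

Lemma WinF i F : inW Phi xi eta Gm i F -> inF Phi xi eta Gm F.
Proof.
case=> F0 [[A [Axi [hR ->]]] ->].
case: i => [[|[|[|[|i]]]] Hi] //=.
- exact: (W1F hR).
- exact: (W2F hR).
- exact: (W3F hR).
- exact: (W4F hR).
Qed.

Lemma Frep_decomp A Axi X Y Z : RepOK A Axi ->
  Frep A Axi X Y Z = p1 xi eta (Frep A Axi) X Y Z + p2 xi eta (Frep A Axi) X Y Z
     + p3 xi eta (Frep A Axi) X Y Z + p4 xi eta (Frep A Axi) X Y Z.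
Proof.
move=> hR; case: (hR) => hl h2 h3 h4 h5.
rewrite /p1 /p2 /p3 /p4 !(Frep_xi3 _ _ hR) !(Frep_xi2 _ _ hR) /Frep.
have e2 : g (X *m Axi) (Z *m Phi) = g (h X *m Axi) (Z *m Phi) + et X * g (xi *m Axi) (Z *m Phi).
  by rewrite {1}(hsplit X) mulmxDl -scalemxAl gDl gZl.
have e1 : g (X *m A (h Y)) Z = g (h X *m A (h Y)) (h Z) + et Z * (- g (h X *m Axi) (Y *m Phi))
    + et X * (g (xi *m A (h Y)) (h Z) + et Z * - g (xi *m Axi) (Y *m Phi)).
  rewrite {1}(hsplit X) mulmxDl -scalemxAl gDl gZl (gsplit (h X *m _)) (gsplit (xi *m _)).
  by rewrite !h4 ?eta_h // !hPhi'.
rewrite e1 e2 !eta_h !hh !hPhi' !mul0r !addr0.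
ring.
Qed.

Definition Z3 (G : tensor R m) := [/\ forall Y Z, G 0 Y Z = 0, forall X Z, G X 0 Z = 0
   & forall X Y, G X Y 0 = 0].

Lemma Frep_Z3 A Axi : RepOK A Axi -> Z3 (Frep A Axi).
Proof.
move=> hR; split => *; rewrite /Frep.
- by rewrite !mul0mx !g0l mulr0 addr0.
- by rewrite h0 (Rep0 hR) mulmx0 g0l eta0 mul0r addr0.
- by rewrite mul0mx !g0r mulr0 addr0.
Qed.

Lemma direct (G0 G1 G2 G3 : tensor R m) : Z3 G0 -> Z3 G1 -> Z3 G2 -> Z3 G3 ->
  (forall X Y Z, p1 xi eta G0 X Y Z + (p2 xi eta G1 X Y Z + (p3 xi eta G2 X Y Z + (p4 xi eta G3 X Y Z + 0))) = 0) ->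
  forall X Y Z, [/\ p1 xi eta G0 X Y Z = 0, p2 xi eta G1 X Y Z = 0,
     p3 xi eta G2 X Y Z = 0 & p4 xi eta G3 X Y Z = 0].
Proof.
move=> [a0 b0 c0] [a1 b1 c1] [a2 b2 c2] [a3 b3 c3] hS X Y Z.
rewrite /p1 /p2 /p3 /p4; split.
- have := hS (h X) (h Y) (h Z).
  rewrite /p1 /p2 /p3 /p4 ?hh ?eta_h ?hxi ?hetaxi ?a0 ?b0 ?c0 ?a1 ?b1 ?c1 ?a2 ?b2 ?c2 ?a3 ?b3 ?c3.
  move=> H; lra.
- have := hS (h X) (h Z) xi; have := hS (h X) (h Y) xi.
  rewrite /p1 /p2 /p3 /p4 ?hh ?eta_h ?hxi ?hetaxi ?a0 ?b0 ?c0 ?a1 ?b1 ?c1 ?a2 ?b2 ?c2 ?a3 ?b3 ?c3.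
  move=> H1 H2; nra.
- have := hS xi (h Y) (h Z).
  rewrite /p1 /p2 /p3 /p4 ?hh ?eta_h ?hxi ?hetaxi ?a0 ?b0 ?c0 ?a1 ?b1 ?c1 ?a2 ?b2 ?c2 ?a3 ?b3 ?c3.
  move=> H; nra.
- have := hS xi xi (h Z); have := hS xi xi (h Y).
  rewrite /p1 /p2 /p3 /p4 ?hh ?eta_h ?hxi ?hetaxi ?a0 ?b0 ?c0 ?a1 ?b1 ?c1 ?a2 ?b2 ?c2 ?a3 ?b3 ?c3.
  move=> H1 H2; nra.
Qed.

Section Inv.
Variable a : 'M[R]_m.
Hypothesis haG : inG Phi xi eta Gm a.
Local Notation b := (invmx a).

Lemma aunit : a \in unitmx. Proof. by case: haG. Qed.
Lemma bKa (X : V) : X *m b *m a = X. Proof. by rewrite mulmxKV // aunit. Qed.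
Lemma aKb (X : V) : X *m a *m b = X. Proof. by rewrite mulmxK // aunit. Qed.
Lemma etb (X : V) : et (X *m b) = et X.
Proof. by case: haG => _ _ _ h4 _; rewrite -{2}(bKa X) h4. Qed.
Lemma eta_a (X : V) : et (X *m a) = et X.
Proof. by case: haG. Qed.
Lemma xia : xi *m a = xi. Proof. by case: haG. Qed.
Lemma xib : xi *m b = xi. Proof. by rewrite -{1}xia aKb. Qed.
Lemma hb (X : V) : h (X *m b) = h X *m b.
Proof. by rewrite /hmap mulmxBl -scalemxAl xib etb. Qed.
Lemma Phia (X : V) : X *m a *m Phi = X *m Phi *m a.
Proof. by case: haG. Qed.
Lemma Phib (X : V) : X *m b *m Phi = X *m Phi *m b.
Proof. by rewrite -[X *m b *m Phi]aKb -Phia bKa. Qed.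
Lemma gb (X Y : V) : g (X *m b) (Y *m b) = g X Y.
Proof. by case: haG => _ _ _ _ h5; rewrite -h5 !bKa. Qed.
Lemma gb' (U Z : V) : g U (Z *m b) = g (U *m a) Z.
Proof. by rewrite -{1}(aKb U) gb. Qed.

Definition Aa (A : V -> 'M[R]_m) (Y : V) : 'M[R]_m := b *m A (Y *m b) *m a.
Lemma actA A (X Y : V) : X *m Aa A Y = X *m b *m A (Y *m b) *m a.
Proof. by rewrite /Aa !mulmxA. Qed.

Lemma lam_rep A Axi : RepOK A Axi -> inF Phi xi eta Gm (lam a (Frep A Axi)).
Proof.
move=> hR; have [AD AZ] := RepLin hR; case: (hR) => hl h2 h3 h4 h5.
exists (Aa A), (b *m Axi *m a); split; first split.
- move=> c Y Z; apply: mx_ext => X.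
  by rewrite mulmxDr -scalemxAr !(actA A) mulmxDl -scalemxAl AD AZ mulmxDr mulmxDl -!scalemxAr -!scalemxAl.
- move=> X Y Z eY eZ; rewrite !(actA A) -!gb' h2 ?etb //.
- move=> X Y eY; rewrite !(actA A) -Phib h3 ?etb // mulmxBl mulNmx -scalemxAl xia -Phia.
  by rewrite gb' !mulmxA.
- move=> X Y eY; rewrite !(actA A) eta_a h4 ?etb // Phib gb' !mulmxA //.
- by move=> X; rewrite !mulmxA eta_a h5.
apply: functional_extensionality => X; apply: functional_extensionality => Y.
apply: functional_extensionality => Z.
by rewrite /lam /Frep hb gb' etb Phib gb' (actA A) !mulmxA.
Qed.

Lemma lam_pp i F X Y Z : lam a (pp xi eta i F) X Y Z = pp xi eta i (lam a F) X Y Z.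
Proof.
case: i => [[|[|[|[|i]]]] Hi] //=; rewrite /lam /pp /= /p1 /p2 /p3 /p4 ?hb ?etb ?xib //.
Qed.

End Inv.

Local Notation Gi := (invmx Gm).
Definition e (a : 'I_m) : V := delta_mx 0 a.
Definition dd (a : 'I_m) : V := delta_mx 0 a *m invmx Gm.

Definition Lin1 (T : tensor R m) := forall c X X' Y Z, T (c *: X + X') Y Z = c * T X Y Z + T X' Y Z.
Definition Lin2 (T : tensor R m) := forall c X Y Y' Z, T X (c *: Y + Y') Z = c * T X Y Z + T X Y' Z.
Definition Lin3 (T : tensor R m) := forall c X Y Z Z', T X Y (c *: Z + Z') = c * T X Y Z + T X Y Z'.
Definition ML (T : tensor R m) := [/\ Lin1 T, Lin2 T & Lin3 T].

Lemma sumlin (f : V -> R) (u : 'I_m -> R) (v : 'I_m -> V) :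
  (forall c x y, f (c *: x + y) = c * f x + f y) ->
  f (\sum_(q < m) u q *: v q) = \sum_(q < m) u q * f (v q).
Proof.
move=> hf.
have f0 : f 0 = 0.
  have := hf 1 0 0; rewrite scale1r addr0 mul1r => E.
  by rewrite -[LHS](addrK (f 0) (f 0)) -E subrr.
have fD : forall x y, f (x + y) = f x + f y by move=> x y; have := hf 1 x y; rewrite scale1r mul1r.
rewrite (big_morph f fD f0); apply: eq_bigr => q _.
by have := hf (u q) (v q) 0; rewrite !addr0 f0 addr0.
Qed.

Lemma ddE a : dd a = \sum_(q < m) Gi a q *: e q.
Proof.
rewrite {1}(row_sum_delta (dd a)); apply: eq_bigr => q _.
by rewrite /dd /e -rowE mxE.
Qed.

Lemma GxiT : Gm *m xi^T = eta.
Proof.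
apply/matrixP => i j; rewrite ord1.
have := gxi (delta_mx 0 i); rewrite /gf /etaf -mulmxA -!rowE !mxE.
by [].
Qed.
Lemma GiEta : Gi *m eta = xi^T.
Proof. by rewrite -GxiT mulKmx. Qed.
Lemma Gisym : Gi^T = Gi.
Proof. by rewrite trmx_inv Gsym. Qed.
Lemma eta_dd a : et (dd a) = xi 0 a.
Proof. by rewrite /etaf /dd -mulmxA GiEta -rowE !mxE. Qed.
Lemma eta_e a : et (e a) = eta a 0.
Proof. by rewrite /etaf /e -rowE mxE. Qed.
Lemma sum_eta_dd : \sum_(a < m) eta a 0 *: dd a = xi.
Proof.
rewrite /dd.
have -> : \sum_(a < m) eta a 0 *: ((delta_mx 0 a : V) *m Gi) = (\sum_(a < m) eta^T 0 a *: (delta_mx 0 a : V)) *m Gi.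
  by rewrite mulmx_suml; apply: eq_bigr => a _; rewrite -scalemxAl mxE.
rewrite -row_sum_delta -[eta^T *m Gi]trmxK trmx_mul trmxK Gisym GiEta.
by rewrite trmxK.
Qed.

Lemma tipE T1 T2 : ML T2 ->
  tip Gm T1 T2 = \sum_(a < m) \sum_(b < m) \sum_(c < m)
      T1 (e a) (e b) (e c) * T2 (dd a) (dd b) (dd c).
Proof.
case=> l1 l2 l3; rewrite /tip /e /=.
apply eq_bigr => a _; apply eq_bigr => b _; apply eq_bigr => c _.
rewrite (ddE a) (sumlin _ _ (fun c x y => l1 c x y _ _)) big_distrr.
apply: eq_bigr => q _ /=.
rewrite (ddE b) (sumlin _ _ (fun c x y => l2 c _ x y _)) big_distrr mulr_sumr.
apply: eq_bigr => r _ /=.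
rewrite (ddE c) (sumlin _ _ (fun c x y => l3 c _ _ x y)) !mulr_sumr.
apply: eq_bigr => s _ /=.
rewrite /e; ring.
Qed.

Definition HS1 (T : tensor R m) := forall X Y Z, T X Y Z = T (h X) Y Z.
Definition HS2 (T : tensor R m) := forall X Y Z, T X Y Z = T X (h Y) Z.
Definition HS3 (T : tensor R m) := forall X Y Z, T X Y Z = T X Y (h Z).
Definition ES1 (T : tensor R m) := forall X Y Z, T X Y Z = et X * T xi Y Z.
Definition ES2 (T : tensor R m) := forall X Y Z, T X Y Z = et Y * T X xi Z.
Definition ES3 (T : tensor R m) := forall X Y Z, T X Y Z = et Z * T X Y xi.

Lemma lin0 (f : V -> R) : (forall c x y, f (c *: x + y) = c * f x + f y) -> f 0 = 0.
Proof.
move=> hf; have := hf 1 0 0; rewrite scale1r addr0 mul1r => E.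
by rewrite -[LHS](addrK (f 0) (f 0)) -E subrr.
Qed.

Lemma sum3_1 (F : 'I_m -> 'I_m -> 'I_m -> R) :
  \sum_(a < m) \sum_(b < m) \sum_(c < m) F a b c = \sum_(b < m) \sum_(c < m) \sum_(a < m) F a b c.
Proof. rewrite exchange_big; apply: eq_bigr => b _; exact: exchange_big. Qed.
Lemma sum3_2 (F : 'I_m -> 'I_m -> 'I_m -> R) :
  \sum_(a < m) \sum_(b < m) \sum_(c < m) F a b c = \sum_(a < m) \sum_(c < m) \sum_(b < m) F a b c.
Proof. apply: eq_bigr => a _; exact: exchange_big. Qed.

Lemma orthF1 T1 T2 : ML T1 -> ML T2 -> HS1 T1 -> ES1 T2 -> tip Gm T1 T2 = 0.
Proof.
move=> [l1 _ _] M2 hs es; rewrite tipE // sum3_1.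
apply: big1 => b _; apply: big1 => c _.
rewrite (eq_bigr (fun a => xi 0 a * T1 (e a) (e b) (e c) * T2 xi (dd b) (dd c))); last first.
  by move=> a _; rewrite (es (dd a)) eta_dd; ring.
rewrite -big_distrl /= -(@sumlin (fun X : V => T1 X (e b) (e c)) (fun q => xi 0 q) e (fun c x y => l1 c x y _ _)).
by rewrite -row_sum_delta hs hxi (@lin0 _ (fun c x y => l1 c x y _ _)) mul0r.
Qed.

Lemma orthR1 T1 T2 : ML T1 -> ML T2 -> ES1 T1 -> HS1 T2 -> tip Gm T1 T2 = 0.
Proof.
move=> M1 M2 es hs; rewrite tipE // sum3_1; case: M2 => l1 _ _.
apply: big1 => b _; apply: big1 => c _.
rewrite (eq_bigr (fun a => T1 xi (e b) (e c) * (eta a 0 * T2 (dd a) (dd b) (dd c)))); last first.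
  by move=> a _; rewrite (es (e a)) eta_e; ring.
rewrite -big_distrr /= -(@sumlin (fun X : V => T2 X (dd b) (dd c)) (fun q => eta q 0) dd (fun c x y => l1 c x y _ _)).
by rewrite sum_eta_dd hs hxi (@lin0 _ (fun c x y => l1 c x y _ _)) mulr0.
Qed.

Lemma orthF2 T1 T2 : ML T1 -> ML T2 -> HS2 T1 -> ES2 T2 -> tip Gm T1 T2 = 0.
Proof.
move=> [_ l2 _] M2 hs es; rewrite tipE // sum3_2.
apply: big1 => a _; apply: big1 => c _.
rewrite (eq_bigr (fun b => xi 0 b * T1 (e a) (e b) (e c) * T2 (dd a) xi (dd c))); last first.
  by move=> b _; rewrite (es _ (dd b)) eta_dd; ring.
rewrite -big_distrl /= -(@sumlin (fun Y : V => T1 (e a) Y (e c)) (fun q => xi 0 q) e (fun c x y => l2 c _ x y _)).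
by rewrite -row_sum_delta hs hxi (@lin0 _ (fun c x y => l2 c _ x y _)) mul0r.
Qed.

Lemma orthR2 T1 T2 : ML T1 -> ML T2 -> ES2 T1 -> HS2 T2 -> tip Gm T1 T2 = 0.
Proof.
move=> M1 M2 es hs; rewrite tipE // sum3_2; case: M2 => _ l2 _.
apply: big1 => a _; apply: big1 => c _.
rewrite (eq_bigr (fun b => T1 (e a) xi (e c) * (eta b 0 * T2 (dd a) (dd b) (dd c)))); last first.
  by move=> b _; rewrite (es _ (e b)) eta_e; ring.
rewrite -big_distrr /= -(@sumlin (fun Y : V => T2 (dd a) Y (dd c)) (fun q => eta q 0) dd (fun c x y => l2 c _ x y _)).
by rewrite sum_eta_dd hs hxi (@lin0 _ (fun c x y => l2 c _ x y _)) mulr0.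
Qed.

Lemma orthF3 T1 T2 : ML T1 -> ML T2 -> HS3 T1 -> ES3 T2 -> tip Gm T1 T2 = 0.
Proof.
move=> [_ _ l3] M2 hs es; rewrite tipE //.
apply: big1 => a _; apply: big1 => b _.
rewrite (eq_bigr (fun c => xi 0 c * T1 (e a) (e b) (e c) * T2 (dd a) (dd b) xi)); last first.
  by move=> c _; rewrite (es _ _ (dd c)) eta_dd; ring.
rewrite -big_distrl /= -(@sumlin (fun Z : V => T1 (e a) (e b) Z) (fun q => xi 0 q) e (fun c x y => l3 c _ _ x y)).
by rewrite -row_sum_delta hs hxi (@lin0 _ (fun c x y => l3 c _ _ x y)) mul0r.
Qed.

Lemma orthR3 T1 T2 : ML T1 -> ML T2 -> ES3 T1 -> HS3 T2 -> tip Gm T1 T2 = 0.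
Proof.
move=> M1 M2 es hs; rewrite tipE //; case: M2 => _ _ l3.
apply: big1 => a _; apply: big1 => b _.
rewrite (eq_bigr (fun c => T1 (e a) (e b) xi * (eta c 0 * T2 (dd a) (dd b) (dd c)))); last first.
  by move=> c _; rewrite (es _ _ (e c)) eta_e; ring.
rewrite -big_distrr /= -(@sumlin (fun Z : V => T2 (dd a) (dd b) Z) (fun q => eta q 0) dd (fun c x y => l3 c _ _ x y)).
by rewrite sum_eta_dd hs hxi (@lin0 _ (fun c x y => l3 c _ _ x y)) mulr0.
Qed.

Definition C2a (T : tensor R m) : tensor R m := fun X Y Z => - et Y * T (h X) (h Z) xi.
Definition C2b (T : tensor R m) : tensor R m := fun X Y Z => et Z * T (h X) (h Y) xi.
Definition C4a (T : tensor R m) : tensor R m := fun X Y Z => et X * et Y * T xi xi (h Z).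
Definition C4b (T : tensor R m) : tensor R m := fun X Y Z => - (et X * et Z * T xi xi (h Y)).

Ltac mlt := let l1 := fresh "l1" in let l2 := fresh "l2" in let l3 := fresh "l3" in
  case=> l1 l2 l3; split => c ? ? ? ?;
  rewrite /p1 /p3 /C2a /C2b /C4a /C4b ?hD ?hZ ?etaD ?etaZ ?l1 ?l2 ?l3; ring.

Lemma ML1 T : ML T -> ML (p1 xi eta T). Proof. mlt. Qed.
Lemma ML2a T : ML T -> ML (C2a T). Proof. mlt. Qed.
Lemma ML2b T : ML T -> ML (C2b T). Proof. mlt. Qed.
Lemma ML3 T : ML T -> ML (p3 xi eta T). Proof. mlt. Qed.
Lemma ML4a T : ML T -> ML (C4a T). Proof. mlt. Qed.
Lemma ML4b T : ML T -> ML (C4b T). Proof. mlt. Qed.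

Ltac tyt := move=> ? ? ?; rewrite /p1 /p3 /C2a /C2b /C4a /C4b ?hh ?hetaxi; ring.

Lemma t1a T : HS1 (p1 xi eta T). Proof. tyt. Qed.
Lemma t1b T : HS2 (p1 xi eta T). Proof. tyt. Qed.
Lemma t1c T : HS3 (p1 xi eta T). Proof. tyt. Qed.
Lemma t2aa T : HS1 (C2a T). Proof. tyt. Qed.
Lemma t2ab T : ES2 (C2a T). Proof. tyt. Qed.
Lemma t2ac T : HS3 (C2a T). Proof. tyt. Qed.
Lemma t2ba T : HS1 (C2b T). Proof. tyt. Qed.
Lemma t2bb T : HS2 (C2b T). Proof. tyt. Qed.
Lemma t2bc T : ES3 (C2b T). Proof. tyt. Qed.
Lemma t3a T : ES1 (p3 xi eta T). Proof. tyt. Qed.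
Lemma t3b T : HS2 (p3 xi eta T). Proof. tyt. Qed.
Lemma t3c T : HS3 (p3 xi eta T). Proof. tyt. Qed.
Lemma t4aa T : ES1 (C4a T). Proof. tyt. Qed.
Lemma t4ab T : ES2 (C4a T). Proof. tyt. Qed.
Lemma t4ac T : HS3 (C4a T). Proof. tyt. Qed.
Lemma t4ba T : ES1 (C4b T). Proof. tyt. Qed.
Lemma t4bb T : HS2 (C4b T). Proof. tyt. Qed.
Lemma t4bc T : ES3 (C4b T). Proof. tyt. Qed.

Lemma tipDl (T Ta Tb T2 : tensor R m) : (forall X Y Z, T X Y Z = Ta X Y Z + Tb X Y Z) ->
  tip Gm T T2 = tip Gm Ta T2 + tip Gm Tb T2.
Proof.
move=> E; rewrite /tip /= -big_split; apply: eq_bigr => a _.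
rewrite -big_split; apply: eq_bigr => b _.
rewrite -big_split; apply: eq_bigr => c _.
rewrite -big_split; apply: eq_bigr => q _.
rewrite -big_split; apply: eq_bigr => r _.
rewrite -big_split; apply: eq_bigr => s _.
rewrite E /=; ring.
Qed.
Lemma tipDr (T Ta Tb T1 : tensor R m) : (forall X Y Z, T X Y Z = Ta X Y Z + Tb X Y Z) ->
  tip Gm T1 T = tip Gm T1 Ta + tip Gm T1 Tb.
Proof.
move=> E; rewrite /tip /= -big_split; apply: eq_bigr => a _.
rewrite -big_split; apply: eq_bigr => b _.
rewrite -big_split; apply: eq_bigr => c _.
rewrite -big_split; apply: eq_bigr => q _.
rewrite -big_split; apply: eq_bigr => r _.
rewrite -big_split; apply: eq_bigr => s _.
rewrite E /=; ring.
Qed.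

Lemma tip_p2l T T2 : tip Gm (p2 xi eta T) T2 = tip Gm (C2a T) T2 + tip Gm (C2b T) T2.
Proof. by apply: tipDl. Qed.
Lemma tip_p4l T T2 : tip Gm (p4 xi eta T) T2 = tip Gm (C4a T) T2 + tip Gm (C4b T) T2.
Proof. by apply: tipDl. Qed.
Lemma tip_p2r T T2 : tip Gm T2 (p2 xi eta T) = tip Gm T2 (C2a T) + tip Gm T2 (C2b T).
Proof. by apply: tipDr. Qed.
Lemma tip_p4r T T2 : tip Gm T2 (p4 xi eta T) = tip Gm T2 (C4a T) + tip Gm T2 (C4b T).
Proof. by apply: tipDr. Qed.

Lemma add00 (x y : R) : x = 0 -> y = 0 -> x + y = 0.
Proof. by move=> -> ->; rewrite addr0. Qed.

Hint Resolve ML1 ML2a ML2b ML3 ML4a ML4b t1a t1b t1c t2aa t2ab t2ac t2ba t2bb t2bc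
  t3a t3b t3c t4aa t4ab t4ac t4ba t4bb t4bc : typ.

Ltac orth := first [ apply: orthF1; solve [auto with typ] | apply: orthR1; solve [auto with typ]
  | apply: orthF2; solve [auto with typ] | apply: orthR2; solve [auto with typ]
  | apply: orthF3; solve [auto with typ] | apply: orthR3; solve [auto with typ] ].
Ltac solve_sum := lazymatch goal with
  | |- _ + _ = 0 => apply: add00; solve_sum
  | |- _ => orth end.

Lemma tip_pp (i j : 'I_4) T T' : ML T -> ML T' -> i != j ->
  tip Gm (pp xi eta i T) (pp xi eta j T') = 0.
Proof.
move=> MT MT'.
case: i => [[|[|[|[|i]]]] Hi] //; case: j => [[|[|[|[|j]]]] Hj] //= _;
  rewrite /pp /= ?tip_p2l ?tip_p4l ?tip_p2r ?tip_p4r; solve_sum.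
Qed.

Lemma Frep_ML A Axi : RepOK A Axi -> ML (Frep A Axi).
Proof.
move=> hR; have [AD AZ] := RepLin hR; split => c ? ? ? ?; rewrite /Frep.
- rewrite !(mulmxDl (c *: _)) -!scalemxAl !gDl !gZl; ring.
- rewrite (hD (c *: _)) hZ (AD (c *: _)) AZ mulmxDr -scalemxAr gDl gZl etaD etaZ; ring.
- by rewrite !(mulmxDl (c *: _)) -!scalemxAl !gDr !gZr; ring.
Qed.

Lemma decomp_eq F A Axi : RepOK A Axi -> F = Frep A Axi -> forall X Y Z,
  F X Y Z = p1 xi eta F X Y Z + p2 xi eta F X Y Z + p3 xi eta F X Y Z + p4 xi eta F X Y Z.
Proof. by move=> hR -> X Y Z; apply: Frep_decomp. Qed.

Lemma inF_Z3 F : inF Phi xi eta Gm F -> Z3 F.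
Proof. by case=> A [Axi [hR ->]]; apply: (Frep_Z3 hR). Qed.
Lemma inF_ML F : inF Phi xi eta Gm F -> ML F.
Proof. by case=> A [Axi [hR ->]]; apply: (Frep_ML hR). Qed.

Lemma main_result :
  [/\ forall (i : 'I_4) F, inW Phi xi eta Gm i F -> inF Phi xi eta Gm F,
      forall F, inF Phi xi eta Gm F ->
        exists Fs : 'I_4 -> tensor R m,
          (forall i, inW Phi xi eta Gm i (Fs i)) /\
          F = (fun X Y Z => \sum_(i < 4) Fs i X Y Z),
      forall Fs : 'I_4 -> tensor R m,
        (forall i, inW Phi xi eta Gm i (Fs i)) ->
        (fun X Y Z => \sum_(i < 4) Fs i X Y Z) = (fun _ _ _ => 0) ->
        forall i, Fs i = (fun _ _ _ => 0),
      forall (i j : 'I_4) F1 F2, i != j ->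
        inW Phi xi eta Gm i F1 -> inW Phi xi eta Gm j F2 -> tip Gm F1 F2 = 0
    & forall (i : 'I_4) (a : 'M[R]_m) F,
        inG Phi xi eta Gm a -> inW Phi xi eta Gm i F ->
        inW Phi xi eta Gm i (lam a F)].
Proof.
split.
- exact: WinF.
- move=> F hF; exists (fun i => pp xi eta i F); split.
    by move=> i; exists F.
  case: (hF) => A [Axi [hR eF]].
  apply: functional_extensionality => X; apply: functional_extensionality => Y.
  apply: functional_extensionality => Z.
  rewrite !big_ord_recl big_ord0 /pp /= (decomp_eq hR eF).
  ring.
- move=> Fs hW hsum.
  have hS : forall X Y Z, \sum_(i < 4) Fs i X Y Z = 0.
    by move=> X Y Z; have := congr1 (fun f => f X Y Z) hsum.
  have [G0 [hG0 e0]] := hW ord0.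
  have [G1 [hG1 e1]] := hW (lift ord0 ord0).
  have [G2 [hG2 e2]] := hW (lift ord0 (lift ord0 ord0)).
  have [G3 [hG3 e3]] := hW (lift ord0 (lift ord0 (lift ord0 ord0))).
  have H := direct (inF_Z3 hG0) (inF_Z3 hG1) (inF_Z3 hG2) (inF_Z3 hG3).
  have {}H : forall X Y Z, [/\ p1 xi eta G0 X Y Z = 0, p2 xi eta G1 X Y Z = 0,
     p3 xi eta G2 X Y Z = 0 & p4 xi eta G3 X Y Z = 0].
    apply: H => X Y Z; have := hS X Y Z.
    by rewrite !big_ord_recl big_ord0 e0 e1 e2 e3 /pp /=.
  move=> i; apply: functional_extensionality => X; apply: functional_extensionality => Y.
  apply: functional_extensionality => Z.
  case: i => [[|[|[|[|i]]]] Hi] //.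
  + have -> : Ordinal Hi = ord0 by apply: val_inj.
    by rewrite e0; case: (H X Y Z).
  + have -> : Ordinal Hi = lift ord0 ord0 by apply: val_inj.
    by rewrite e1; case: (H X Y Z).
  + have -> : Ordinal Hi = lift ord0 (lift ord0 ord0) by apply: val_inj.
    by rewrite e2; case: (H X Y Z).
  + have -> : Ordinal Hi = lift ord0 (lift ord0 (lift ord0 ord0)) by apply: val_inj.
    by rewrite e3; case: (H X Y Z).
- move=> i j F1 F2 ne [F0 [hF0 ->]] [F0' [hF0' ->]].
  exact: tip_pp (inF_ML hF0) (inF_ML hF0') ne.
- move=> i a F haG [F0 [hF0 ->]]; exists (lam a F0); split.
    by case: hF0 => A [Axi [hR ->]]; apply: lam_rep.
  apply: functional_extensionality => X; apply: functional_extensionality => Y.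
  apply: functional_extensionality => Z.
  exact: lam_pp.
Qed.

End Main.

Theorem proposition2p1 (R : realType) (n : nat)
  (Phi : 'M[R]_((2 * n).+1)) (xi : 'rV[R]_((2 * n).+1)) (eta : 'cV[R]_((2 * n).+1))
  (Gm : 'M[R]_((2 * n).+1)) :
  (* almost paracontact structure *)
  xi *m Phi = 0 ->
  (forall X : 'rV[R]_((2 * n).+1), etaf eta (X *m Phi) = 0) ->
  etaf eta xi = 1 ->
  (forall X : 'rV[R]_((2 * n).+1), (X *m Phi) *m Phi = X - etaf eta X *: xi) ->
  (* phi restricted to D = ker eta has eigenvalues +-1 with n-dim eigenspaces *)
  (forall a : R, (eigenspace Phi a :&: kermx eta)%MS != 0 -> a = 1 \/ a = -1) ->
  \rank (eigenspace Phi 1 :&: kermx eta)%MS = n ->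
  \rank (eigenspace Phi (-1) :&: kermx eta)%MS = n ->
  (* g nondegenerate symmetric, compatible *)
  Gm^T = Gm -> Gm \in unitmx ->
  (forall X Y : 'rV[R]_((2 * n).+1),
     gf Gm (X *m Phi) (Y *m Phi) = - gf Gm X Y + etaf eta X * etaf eta Y) ->
  [/\ (* each W_i lies in F *)
      forall (i : 'I_4) F, inW Phi xi eta Gm i F -> inF Phi xi eta Gm F,
      (* F = W_1 + W_2 + W_3 + W_4 *)
      forall F, inF Phi xi eta Gm F ->
        exists Fs : 'I_4 -> tensor R (2 * n).+1,
          (forall i, inW Phi xi eta Gm i (Fs i)) /\
          F = (fun X Y Z => \sum_(i < 4) Fs i X Y Z),
      (* the sum is direct *)
      forall Fs : 'I_4 -> tensor R (2 * n).+1,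
        (forall i, inW Phi xi eta Gm i (Fs i)) ->
        (fun X Y Z => \sum_(i < 4) Fs i X Y Z) = (fun _ _ _ => 0) ->
        forall i, Fs i = (fun _ _ _ => 0),
      (* mutual orthogonality *)
      forall (i j : 'I_4) F1 F2, i != j ->
        inW Phi xi eta Gm i F1 -> inW Phi xi eta Gm j F2 -> tip Gm F1 F2 = 0
    & (* G-invariance *)
      forall (i : 'I_4) (a : 'M[R]_((2 * n).+1)) F,
        inG Phi xi eta Gm a -> inW Phi xi eta Gm i F ->
        inW Phi xi eta Gm i (lam a F)].
Proof.
move=> h1 h2 h3 h4 _ _ _ h5 h6 h7.
exact: (main_result h1 h2 h3 h4 h5 h6 h7).
Qed.
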